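(* If $M\in\mathcal{D}_2$, then the set $P$ of all isolated points of $M$ is discrete.
   Context: A function on an open convex set $C\subset\mathbb{R}^d$ is DC if it is the difference of two convex functions on $C$. $\mathcal{D}_2$ denotes the family consisting of $\varnothing$ together with all nonempty closed sets $A\subset\mathbb{R}^2$ whose distance function $d_A=\operatorname{dist}(\cdot,A)$ is DC on $\mathbb{R}^2$. A set $D\subset\mathbb{R}^2$ is discrete if each point of $\mathbb{R}^2$ has a neighbourhood containing at most one point of $D$. *)

(* Defs.v *)
From Stdlib Require Import Reals.
From Coquelicot Require Import Coquelicot.
Open Scope R_scope.

Definition pt := (R * R)%type.
Definition edist (x y : pt) : R :=
  sqrt ((fst x - fst y) ^ 2 + (snd x - snd y) ^ 2).

Definition convex2 (g : pt -> R) : Prop :=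
  forall (x y : pt) (t : R), 0 <= t <= 1 ->
    g (t * fst x + (1 - t) * fst y, t * snd x + (1 - t) * snd y)
      <= t * g x + (1 - t) * g y.

Definition DC2 (f : pt -> R) : Prop :=
  exists g h : pt -> R, convex2 g /\ convex2 h /\ forall x, f x = g x - h x.

Definition closed2 (A : pt -> Prop) : Prop :=
  forall x : pt, (forall eps, 0 < eps -> exists a, A a /\ edist x a < eps) -> A x.

(* Distance function d_A(x) = inf { |x - a| : a in A } (finite for nonempty A). *)
Definition dist_set (A : pt -> Prop) (x : pt) : R :=
  real (Glb_Rbar (fun r => exists a, A a /\ r = edist x a)).

Definition D2 (A : pt -> Prop) : Prop :=
  (forall x, ~ A x) \/
  ((exists a, A a) /\ closed2 A /\ DC2 (dist_set A)).

Definition isolated_points (M : pt -> Prop) : pt -> Prop :=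
  fun x => M x /\ exists eps, 0 < eps /\ forall y, M y -> edist y x < eps -> y = x.

Definition discrete2 (D : pt -> Prop) : Prop :=
  forall p : pt, exists eps, 0 < eps /\
    forall y z, D y -> D z -> edist y p < eps -> edist z p < eps -> y = z.

(* Main.v *)
Require Import Defs.
From Stdlib Require Import Reals Lra Lia Psatz ZArith List Classical ClassicalEpsilon.
From Coquelicot Require Import Coquelicot.
Open Scope R_scope.

Lemma edist_sym x y : edist x y = edist y x.
Proof. unfold edist. f_equal. ring. Qed.

Lemma edist_nonneg x y : 0 <= edist x y.
Proof. apply sqrt_pos. Qed.

Lemma edist_sq x y : edist x y * edist x y = (fst x - fst y)^2 + (snd x - snd y)^2.
Proof. destruct x as [x1 x2], y as [y1 y2]; unfold edist; cbn [fst snd]. apply sqrt_sqrt. apply Rplus_le_le_0_compat; apply pow2_ge_0. Qed.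

Lemma edist_tri x y z : edist x z <= edist x y + edist y z.
Proof.
  destruct x as [x1 x2], y as [y1 y2], z as [z1 z2].
  assert (H1 := edist_sq (x1,x2) (y1,y2)). assert (H2 := edist_sq (y1,y2) (z1,z2)). cbn [fst snd] in H1, H2.
  assert (P1 := edist_nonneg (x1,x2) (y1,y2)). assert (P2 := edist_nonneg (y1,y2) (z1,z2)).
  set (a := x1 - y1) in *. set (b := x2 - y2) in *.
  set (c := y1 - z1) in *. set (d := y2 - z2) in *.
  set (S1 := edist (x1,x2) (y1,y2)) in *. set (S2 := edist (y1,y2) (z1,z2)) in *.
  assert (Hcs : a*c + b*d <= S1 * S2).
  { assert ((a*c+b*d)^2 <= (S1*S2)^2) by (replace ((S1*S2)^2) with ((S1*S1)*(S2*S2)) by ring; rewrite H1, H2;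
      assert (E: (a^2+b^2)*(c^2+d^2) = (a*c+b*d)^2 + (a*d-b*c)^2) by ring; pose proof (pow2_ge_0 (a*d-b*c)); lra).
    assert (0 <= S1*S2) by (apply Rmult_le_pos; auto).
    destruct (Rle_or_lt (a*c+b*d) (S1*S2)); auto. nra. }
  unfold edist at 1.
  cbn [fst snd]. replace ((x1 - z1)^2 + (x2 - z2)^2) with ((a+c)^2 + (b+d)^2) by (unfold a,b,c,d; ring).
  rewrite <- (sqrt_pow2 (S1 + S2)) by lra.
  apply sqrt_le_1_alt. nra.
Qed.

Lemma edist_pos x y : x <> y -> 0 < edist x y.
Proof.
  intros Hne. destruct (Rle_lt_or_eq_dec 0 _ (edist_nonneg x y)) as [H|H]; auto.
  exfalso. apply Hne. assert (Hs := edist_sq x y). rewrite <- H in Hs.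
  destruct x as [x1 x2], y as [y1 y2]; cbn [fst snd] in *.
  pose proof (pow2_ge_0 (x1-y1)); pose proof (pow2_ge_0 (x2-y2)).
  assert (E1 : (x1-y1)^2 = 0) by lra. assert (E2 : (x2-y2)^2 = 0) by lra.
  destruct (Req_dec (x1-y1) 0) as [F1|F1]; [|exfalso; apply (pow_nonzero _ 2 F1 E1)].
  destruct (Req_dec (x2-y2) 0) as [F2|F2]; [|exfalso; apply (pow_nonzero _ 2 F2 E2)].
  f_equal; lra.
Qed.

Lemma edist_refl x : edist x x = 0.
Proof. unfold edist. replace ((fst x - fst x)^2 + (snd x - snd x)^2) with 0 by ring. apply sqrt_0. Qed.

Lemma edist_fst x y : Rabs (fst x - fst y) <= edist x y.
Proof.
  destruct x as [x1 x2], y as [y1 y2]; cbn [fst snd] in *.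
  rewrite <- sqrt_Rsqr_abs. unfold edist; cbn [fst snd]. apply sqrt_le_1_alt. unfold Rsqr. pose proof (pow2_ge_0 (x2-y2)).
  replace ((x1-y1)^2) with ((x1-y1)*(x1-y1)) by ring. lra.
Qed.

Lemma edist_snd x y : Rabs (snd x - snd y) <= edist x y.
Proof.
  destruct x as [x1 x2], y as [y1 y2]; cbn [fst snd] in *.
  rewrite <- sqrt_Rsqr_abs. unfold edist; cbn [fst snd]. apply sqrt_le_1_alt. unfold Rsqr. pose proof (pow2_ge_0 (x1-y1)).
  replace ((x2-y2)^2) with ((x2-y2)*(x2-y2)) by ring. lra.
Qed.

Lemma edist_scale t u w : 0 <= t -> sqrt ((t*u)^2 + (t*w)^2) = t * sqrt (u^2 + w^2).
Proof.
  intros Ht. replace ((t*u)^2 + (t*w)^2) with (t^2 * (u^2+w^2)) by ring.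
  rewrite sqrt_mult by nra. rewrite sqrt_pow2; auto.
Qed.

Lemma conv_pt (g : pt -> R) : convex2 g -> forall x y z t, 0 <= t <= 1 ->
  fst z = t * fst x + (1 - t) * fst y -> snd z = t * snd x + (1 - t) * snd y ->
  g z <= t * g x + (1 - t) * g y.
Proof. intros Hg x y [z1 z2] t Ht H1 H2. cbn [fst snd] in *. subst. apply Hg; auto. Qed.

Lemma quot_le s s' A B : s < 0 -> 0 < s' -> 0 <= s' * A - s * B -> A / s <= B / s'.
Proof.
  intros Hs Hs' H. assert (HA : A = (A/s)*s) by (field; lra).
  assert (HB: B = (B/s')*s') by (field; lra).
  set (u := A/s) in *. set (v := B/s') in *. rewrite HA, HB in H.
  assert (s*s' < 0) by nra. nra.
Qed.

Lemma subgrad (h : pt -> R) : convex2 h -> forall q1 q2 : R,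
  exists a b, forall y1 y2, h (q1,q2) + a*(y1-q1) + b*(y2-q2) <= h (y1,y2).
Proof.
intros Hh q1 q2.
assert (K1 : forall s s', s < 0 -> 0 < s' ->
  (h (q1+s,q2) - h (q1,q2))/s <= (h (q1+s', q2) - h (q1,q2))/s').
{ intros s s' Hs Hs'. apply quot_le; auto.
  set (t := s'/(s'-s)).
  assert (Ht : t * (s'-s) = s') by (unfold t; field; lra).
  assert (Ht0 : 0 <= t <= 1) by (split; nra).
  assert (Hc := conv_pt h Hh (q1+s,q2) (q1+s',q2) (q1,q2) t Ht0).
  cbn [fst snd] in Hc.
  assert (Hc' : h (q1,q2) <= t * h (q1+s,q2) + (1 - t) * h (q1+s',q2)).
  { apply Hc.
    - replace (t * (q1 + s) + (1 - t) * (q1 + s')) with (q1 + s' - t*(s'-s)) by ring. lra.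
    - ring. }
  assert (H := Rmult_le_compat_l (s'-s) _ _ (ltac:(lra)) Hc').
  replace ((s'-s) * (t * h (q1+s,q2) + (1 - t) * h (q1+s',q2))) with
    ((t*(s'-s)) * h (q1+s,q2) + (s'-s) * h (q1+s',q2) - (t*(s'-s)) * h (q1+s',q2)) in H by ring.
  rewrite Ht in H. lra. }
destruct (completeness (fun m => exists s, s < 0 /\ m = (h (q1+s,q2) - h (q1,q2))/s)) as [a [Ha1 Ha2]].
{ exists ((h (q1+1,q2) - h (q1,q2))/1). intros m [s [Hs ->]]. apply K1; lra. }
{ exists ((h (q1+ -1,q2) - h (q1,q2))/ -1). exists (-1). split; [lra|reflexivity]. }
assert (S1 : forall y1, h (q1,q2) + a*(y1-q1) <= h (y1,q2)).
{ intros y1. destruct (Rtotal_order y1 q1) as [Hl|[He|Hgt]].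
  - set (s := y1 - q1). assert (Hs: s<0) by (unfold s; lra).
    assert (Hy : y1 = q1 + s) by (unfold s; ring). rewrite Hy.
    replace (q1+s-q1) with s by ring.
    assert (Q : (h (q1+s,q2) - h (q1,q2))/s <= a) by (apply Ha1; exists s; auto).
    assert (E: h (q1+s,q2) - h (q1,q2) = ((h (q1+s,q2) - h (q1,q2))/s)*s) by (field; lra).
    set (u := (h (q1+s,q2) - h (q1,q2))/s) in *. nra.
  - subst. replace (q1-q1) with 0 by ring. lra.
  - set (s := y1 - q1). assert (Hs: 0<s) by (unfold s; lra).
    assert (Hy : y1 = q1 + s) by (unfold s; ring). rewrite Hy.
    replace (q1+s-q1) with s by ring.
    assert (Q : a <= (h (q1+s,q2) - h (q1,q2))/s).
    { apply Ha2. intros m [s0 [Hs0 ->]]. apply K1; auto. }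
    assert (E: h (q1+s,q2) - h (q1,q2) = ((h (q1+s,q2) - h (q1,q2))/s)*s) by (field; lra).
    set (u := (h (q1+s,q2) - h (q1,q2))/s) in *. nra. }
set (G := fun w1 w2 => h (w1,w2) - h (q1,q2) - a*(w1-q1)).
assert (K2 : forall w1 w2 u1 u2, w2 < q2 -> q2 < u2 ->
  G w1 w2 / (w2 - q2) <= G u1 u2 / (u2 - q2)).
{ intros w1 w2 u1 u2 Hw Hu. apply quot_le; try lra.
  set (s := w2 - q2). set (s' := u2 - q2).
  set (t := s'/(s'-s)).
  assert (Ht : t * (s'-s) = s') by (unfold t, s, s'; field; lra).
  assert (Ht0 : 0 <= t <= 1) by (unfold s, s' in *; split; nra).
  set (z1 := t*w1 + (1-t)*u1).
  assert (Hc := conv_pt h Hh (w1,w2) (u1,u2) (z1,q2) t Ht0).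
  cbn [fst snd] in Hc.
  assert (Hc' : h (z1,q2) <= t * h (w1,w2) + (1 - t) * h (u1,u2)).
  { apply Hc; auto.
    replace (t * w2 + (1 - t) * u2) with (u2 - t*(s'-s)) by (unfold s, s'; ring). rewrite Ht; unfold s'; ring. }
  assert (Hz := S1 z1).
  assert (P : h (q1,q2) + a*(t*w1 + (1-t)*u1 - q1) <= t * h (w1,w2) + (1 - t) * h (u1,u2)) by (unfold z1 in *; lra).
  assert (H := Rmult_le_compat_l (s'-s) _ _ (ltac:(unfold s,s'; lra)) P).
  replace ((s'-s) * (t * h (w1,w2) + (1 - t) * h (u1,u2))) with
    ((t*(s'-s)) * h (w1,w2) + (s'-s) * h (u1,u2) - (t*(s'-s)) * h (u1,u2)) in H by ring.
  replace ((s'-s) * (h (q1,q2) + a*(t*w1 + (1-t)*u1 - q1))) with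
    ((s'-s) * h (q1,q2) + a*((t*(s'-s))*w1 + (s'-s)*u1 - (t*(s'-s))*u1 - (s'-s)*q1)) in H by ring.
  rewrite Ht in H. unfold G. nra. }
destruct (completeness (fun m => exists w1 w2, w2 < q2 /\ m = G w1 w2 / (w2 - q2))) as [b [Hb1 Hb2]].
{ exists (G q1 (q2+1) / (q2 + 1 - q2)). intros m [w1 [w2 [Hw ->]]]. apply K2; lra. }
{ exists (G q1 (q2-1) / (q2 - 1 - q2)). exists q1, (q2-1). split; [lra|reflexivity]. }
exists a, b. intros y1 y2.
destruct (Rtotal_order y2 q2) as [Hl|[He|Hgt]].
- assert (Q : G y1 y2 / (y2 - q2) <= b) by (apply Hb1; exists y1, y2; auto).
  assert (E: G y1 y2 = (G y1 y2 / (y2 - q2)) * (y2 - q2)) by (field; lra).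
  set (u := G y1 y2 / (y2 - q2)) in *. unfold G in E. nra.
- subst. replace (q2-q2) with 0 by ring. specialize (S1 y1). lra.
- assert (Q : b <= G y1 y2 / (y2 - q2)).
  { apply Hb2. intros m [w1 [w2 [Hw ->]]]. apply K2; auto. }
  assert (E: G y1 y2 = (G y1 y2 / (y2 - q2)) * (y2 - q2)) by (field; lra).
  set (u := G y1 y2 / (y2 - q2)) in *. unfold G in E. nra.
Qed.

Lemma ds_le M x a : M a -> dist_set M x <= edist x a.
Proof.
intros Ha. unfold dist_set.
destruct (Glb_Rbar_correct (fun r => exists a, M a /\ r = edist x a)) as [Hlb Hglb].
assert (H := Hlb (edist x a) (ex_intro _ a (conj Ha eq_refl))).
set (l := Glb_Rbar _) in *. destruct l as [v| |]; simpl in *; auto.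
- contradiction.
- apply edist_nonneg.
Qed.

Lemma ds_ge M x m : (exists a, M a) -> (forall a, M a -> m <= edist x a) -> m <= dist_set M x.
Proof.
intros [a0 Ha0] Hm. unfold dist_set.
destruct (Glb_Rbar_correct (fun r => exists a, M a /\ r = edist x a)) as [Hlb Hglb].
assert (H := Hlb (edist x a0) (ex_intro _ a0 (conj Ha0 eq_refl))).
assert (H2 : Rbar_le (Finite m) (Glb_Rbar (fun r => exists a, M a /\ r = edist x a))).
{ apply Hglb. intros r [a [Ha ->]]. simpl. apply Hm; auto. }
set (l := Glb_Rbar _) in *. destruct l as [v| |]; simpl in *; auto; contradiction.
Qed.

Definition Good (g : pt -> R) (q c : pt) : Prop :=
  forall y, g q + fst c * (fst y - fst q) + snd c * (snd y - snd q) + edist y q <= g y.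

Lemma good_exists M g h : convex2 g -> convex2 h -> (forall x, dist_set M x = g x - h x) ->
  forall q, isolated_points M q -> exists c, Good g q c.
Proof.
intros Hg Hh Hf q [Mq [r [Hr Hiso]]].
destruct q as [q1 q2].
destruct (subgrad h Hh q1 q2) as [a [b Hab]].
exists (a,b).
assert (Fq : dist_set M (q1,q2) <= 0).
{ rewrite <- (edist_refl (q1,q2)). apply ds_le; auto. }
assert (Loc : forall y, edist y (q1,q2) < r/2 -> edist y (q1,q2) <= dist_set M y).
{ intros y Hy. apply ds_ge; [exists (q1,q2); auto|]. intros a0 Ha0.
  destruct (classic (a0 = (q1,q2))) as [->|Hne]; [lra|].
  assert (Hfar : r <= edist a0 (q1,q2)).
  { destruct (Rle_or_lt r (edist a0 (q1,q2))); auto. exfalso. apply Hne. apply Hiso; auto. }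
  assert (T := edist_tri a0 y (q1,q2)). rewrite (edist_sym a0 y) in T. lra. }
assert (LocG : forall y, edist y (q1,q2) < r/2 ->
  g (q1,q2) + a * (fst y - q1) + b * (snd y - q2) + edist y (q1,q2) <= g y).
{ intros [y1 y2] Hy. cbn [fst snd]. assert (L := Loc _ Hy).
  rewrite Hf in L, Fq. specialize (Hab y1 y2). lra. }
intros [y1 y2]. cbn [fst snd].
destruct (Rlt_or_le (edist (y1,y2) (q1,q2)) (r/2)) as [Hy|Hy].
- apply (LocG (y1,y2)); auto.
- set (d := edist (y1,y2) (q1,q2)) in *.
  set (t := r / (4*d)).
  assert (Hd : 0 < d) by lra.
  assert (Htd : t * d = r/4) by (unfold t; field; lra).
  assert (Ht0 : 0 < t) by (unfold t; apply Rdiv_lt_0_compat; lra).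
  assert (Ht1 : t <= 1) by nra.
  set (z := (t*y1 + (1-t)*q1, t*y2 + (1-t)*q2)).
  assert (Hz : edist z (q1,q2) = t * d).
  { unfold z, edist, d; cbn [fst snd].
    replace (t * y1 + (1 - t) * q1 - q1) with (t*(y1-q1)) by ring.
    replace (t * y2 + (1 - t) * q2 - q2) with (t*(y2-q2)) by ring.
    apply edist_scale; lra. }
  assert (Gz := LocG z ltac:(lra)).
  assert (Cz : g z <= t * g (y1,y2) + (1-t) * g (q1,q2)).
  { apply (conv_pt g Hg); [lra| |]; unfold z; cbn [fst snd]; ring. }
  unfold z in Gz; cbn [fst snd] in Gz. fold z in Gz.
  rewrite Hz in Gz.
  assert (t * (g (q1,q2) + a*(y1-q1) + b*(y2-q2) + d) <= t * g (y1,y2)).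
  { replace (t * (g (q1,q2) + a*(y1-q1) + b*(y2-q2) + d)) with
      (t * g (q1,q2) + a * (t * y1 + (1 - t) * q1 - q1) + b * (t * y2 + (1 - t) * q2 - q2) + t * d) by ring.
    lra. }
  apply Rmult_le_reg_l with t; auto.
Qed.

Lemma abs_inv x a : Rabs x <= a -> -a <= x <= a.
Proof. intros H. pose proof (Rabs_maj2 x). pose proof (Rle_abs x). lra. Qed.

Lemma segx (g : pt -> R) : convex2 g -> forall a b x y, a < b -> a <= x <= b ->
  g (x,y) <= Rmax (g (a,y)) (g (b,y)).
Proof.
intros Hg a b x y Hab Hx. set (t := (b - x)/(b-a)).
assert (Ht : t*(b-a) = b - x) by (unfold t; field; lra).
assert (Ht0 : 0 <= t <= 1) by (split; nra).
assert (C : g (x,y) <= t * g (a,y) + (1-t) * g (b,y)).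
{ apply (conv_pt g Hg); auto; cbn [fst snd]; [|ring].
  replace (t*a + (1-t)*b) with (b - t*(b-a)) by ring. lra. }
pose proof (Rmax_l (g (a,y)) (g (b,y))). pose proof (Rmax_r (g (a,y)) (g (b,y))). nra.
Qed.

Lemma segy (g : pt -> R) : convex2 g -> forall a b x y, a < b -> a <= y <= b ->
  g (x,y) <= Rmax (g (x,a)) (g (x,b)).
Proof.
intros Hg a b x y Hab Hx. set (t := (b - y)/(b-a)).
assert (Ht : t*(b-a) = b - y) by (unfold t; field; lra).
assert (Ht0 : 0 <= t <= 1) by (split; nra).
assert (C : g (x,y) <= t * g (x,a) + (1-t) * g (x,b)).
{ apply (conv_pt g Hg); auto; cbn [fst snd]; [ring|].
  replace (t*a + (1-t)*b) with (b - t*(b-a)) by ring. lra. }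
pose proof (Rmax_l (g (x,a)) (g (x,b))). pose proof (Rmax_r (g (x,a)) (g (x,b))). nra.
Qed.

Lemma box_upper (g : pt -> R) : convex2 g -> forall p1 p2, exists U, forall z1 z2,
  Rabs (z1 - p1) <= 2 -> Rabs (z2 - p2) <= 2 -> g (z1,z2) <= U.
Proof.
intros Hg p1 p2.
exists (Rmax (Rmax (g (p1-2,p2-2)) (g (p1-2,p2+2))) (Rmax (g (p1+2,p2-2)) (g (p1+2,p2+2)))).
intros z1 z2 H1 H2. apply abs_inv in H1. apply abs_inv in H2.
eapply Rle_trans. apply (segx g Hg (p1-2) (p1+2)); lra.
apply Rmax_lub.
- eapply Rle_trans. apply (segy g Hg (p2-2) (p2+2)); lra. apply Rmax_l.
- eapply Rle_trans. apply (segy g Hg (p2-2) (p2+2)); lra. apply Rmax_r.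
Qed.

Lemma box_lower (g : pt -> R) U p1 p2 : convex2 g -> (forall z1 z2,
  Rabs (z1 - p1) <= 2 -> Rabs (z2 - p2) <= 2 -> g (z1,z2) <= U) ->
  forall q1 q2, Rabs (q1 - p1) <= 2 -> Rabs (q2 - p2) <= 2 -> 2 * g (p1,p2) - U <= g (q1,q2).
Proof.
intros Hg HU q1 q2 H1 H2.
assert (C : g (p1,p2) <= /2 * g (q1,q2) + (1 - /2) * g (2*p1-q1, 2*p2-q2)).
{ apply (conv_pt g Hg); [lra| |]; cbn [fst snd]; field. }
assert (g (2*p1-q1, 2*p2-q2) <= U).
{ apply HU; [replace (2*p1-q1-p1) with (-(q1-p1)) by ring | replace (2*p2-q2-p2) with (-(q2-p2)) by ring];
  rewrite Rabs_Ropp; auto. }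
lra.
Qed.

Definition cell (c : pt) : Z * Z := (up (fst c), up (snd c)).

Lemma same_up a b : up a = up b -> Rabs (a - b) < 1.
Proof.
intros H. destruct (archimed a) as [A1 A2]. destruct (archimed b) as [B1 B2].
rewrite H in A1, A2. apply Rabs_def1; lra.
Qed.

Lemma sep g q q' c c' : Good g q c -> Good g q' c' -> q <> q' -> cell c <> cell c'.
Proof.
intros Hq Hq' Hne Hcell. unfold cell in Hcell. injection Hcell as E1 E2.
apply same_up in E1. apply same_up in E2. apply Rabs_def2 in E1. apply Rabs_def2 in E2.
assert (D := edist_pos _ _ Hne). assert (Dsq := edist_sq q' q).
specialize (Hq q'). specialize (Hq' q).
destruct q as [q1 q2], q' as [r1 r2], c as [c1 c2], c' as [d1 d2]. cbn [fst snd] in *.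
set (d := edist (q1,q2) (r1,r2)) in *. rewrite (edist_sym (r1,r2) (q1,q2)) in Hq, Dsq. fold d in Hq, Dsq.
set (A := c1 - d1) in *. set (B := c2 - d2) in *. set (X := r1 - q1) in *. set (Y := r2 - q2) in *.
assert (S : A*X + B*Y + 2*d <= 0) by (unfold A, B, X, Y in *; lra).
assert (Q1 : 4 * (d*d) <= (A*X+B*Y)^2) by nra.
assert (Q2 : (A*X+B*Y)^2 <= (A^2+B^2)*(X^2+Y^2)).
{ assert (E: (A^2+B^2)*(X^2+Y^2) = (A*X+B*Y)^2 + (A*Y-B*X)^2) by ring.
  pose proof (pow2_ge_0 (A*Y-B*X)). lra. }
assert (A^2 < 1) by nra. assert (B^2 < 1) by nra.
assert (0 < X^2 + Y^2) by nra.
nra.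
Qed.

Definition zrange (K : Z) : list Z :=
  map (fun n => (Z.of_nat n - K)%Z) (seq 0 (Z.to_nat (2*K+1))).

Lemma in_zrange K z : (-K <= z <= K)%Z -> In z (zrange K).
Proof.
intros H. unfold zrange. apply in_map_iff. exists (Z.to_nat (z+K)). split.
- lia.
- apply in_seq. lia.
Qed.

Lemma nodup_map_inj {A B : Type} (F : A -> B) (l : list A) : NoDup l ->
  (forall x y, In x l -> In y l -> F x = F y -> x = y) -> NoDup (map F l).
Proof.
induction l as [|a l IH]; intros Hnd Hinj; simpl; constructor.
- intros Hin. apply in_map_iff in Hin as [x [Hx Hxl]].
  inversion Hnd; subst. assert (x = a) by (apply Hinj; simpl; auto). subst; contradiction.
- inversion Hnd; subst. apply IH; auto. intros x y Hx Hy. apply Hinj; simpl; auto.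
Qed.

Definition minl (f : pt -> R) (l : list pt) : R := fold_right (fun q m => Rmin (f q) m) 1 l.

Lemma minl_spec f l : (forall q, In q l -> 0 < f q) ->
  0 < minl f l /\ minl f l <= 1 /\ forall q, In q l -> minl f l <= f q.
Proof.
induction l as [|a l IH]; intros H; simpl.
- split; [lra|split; [lra|tauto]].
- destruct IH as [I1 [I2 I3]]. { intros q Hq. apply H; simpl; auto. }
  assert (Ha := H a (or_introl eq_refl)).
  split; [apply Rmin_pos; auto|split].
  + eapply Rle_trans; [apply Rmin_r|auto].
  + intros q [->|Hq]. apply Rmin_l. eapply Rle_trans; [apply Rmin_r|auto].
Qed.

Lemma build (D : pt -> Prop) p :
  (forall eps, 0 < eps -> exists y z, D y /\ D z /\ edist y p < eps /\ edist z p < eps /\ y <> z) ->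
  forall n, exists l, length l = n /\ NoDup l /\ forall q, In q l -> D q /\ edist q p < 1 /\ 0 < edist q p.
Proof.
intros Hnd n. induction n as [|n [l [Hlen [Hnodup Hl]]]].
- exists nil. split; [reflexivity|split; [constructor|intros q []]].
- destruct (minl_spec (fun q => edist q p) l) as [M1 [M2 M3]].
  { intros q Hq. apply Hl; auto. }
  destruct (Hnd _ M1) as [y [z [Dy [Dz [Hy [Hz Hyz]]]]]].
  assert (W : exists w, D w /\ edist w p < minl (fun q => edist q p) l /\ w <> p).
  { destruct (classic (y = p)) as [Hyp|Hyp].
    - exists z. split; [exact Dz|split; [exact Hz|]]. intros Hzp. apply Hyz. rewrite Hyp, Hzp. reflexivity.
    - exists y. split; [exact Dy|split; [exact Hy|exact Hyp]]. }
  destruct W as [w [Dw [Hw Hwp]]].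
  exists (w :: l). split; [simpl; lia|split].
  + constructor; auto. intros Hin. specialize (M3 w Hin). simpl in M3. lra.
  + intros q [<-|Hq]; auto. split; auto. split; [lra|]. apply edist_pos; auto.
Qed.

Theorem corollary4p13 (M : pt -> Prop) :
  D2 M -> discrete2 (isolated_points M).
Proof.
intros [Hempty | [Hne [Hcl [g [h [Hg [Hh Hf]]]]]]].
- intros p. exists 1. split; [lra|]. intros y z [Hy _]. exfalso; exact (Hempty y Hy).
- intros p. apply NNPP. intros Hnd.
  assert (Hnd' : forall eps, 0 < eps -> exists y z, isolated_points M y /\ isolated_points M z /\
     edist y p < eps /\ edist z p < eps /\ y <> z).
  { intros eps Heps. apply NNPP; intros Hno. apply Hnd. exists eps. split; auto.
    intros y z Hy Hz Hy' Hz'. apply NNPP; intros Hyz. apply Hno. exists y, z. auto. }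
  destruct p as [p1 p2].
  destruct (box_upper g Hg p1 p2) as [U HU].
  assert (HL := box_lower g U p1 p2 Hg HU).
  set (Bd := 2*U - 2*g (p1,p2)).
  set (K := up Bd).
  set (grid := list_prod (zrange K) (zrange K)).
  set (cf := fun q => epsilon (inhabits ((0,0) : pt)) (fun c => Good g q c)).
  assert (Hcf : forall q, isolated_points M q -> Good g q (cf q)).
  { intros q Hq. apply epsilon_spec. apply (good_exists M g h); auto. }
  destruct (build _ _ Hnd' (S (length grid))) as [l [Hlen [Hnodup Hl]]].
  assert (Hbound : forall q, In q l -> In (cell (cf q)) grid).
  { intros q Hq. destruct (Hl q Hq) as [Iq [Hq1 _]].
    assert (Gq := Hcf q Iq).
    assert (A1 := edist_fst q (p1,p2)). assert (A2 := edist_snd q (p1,p2)).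
    destruct q as [q1 q2]. cbn [fst snd] in *.
    destruct (cf (q1,q2)) as [c1 c2]. unfold cell; cbn [fst snd].
    assert (Lq := HL q1 q2 ltac:(lra) ltac:(lra)).
    assert (G1 := Gq (q1+1,q2)). assert (G2 := Gq (q1-1,q2)).
    assert (G3 := Gq (q1,q2+1)). assert (G4 := Gq (q1,q2-1)).
    cbn [fst snd] in G1, G2, G3, G4.
    assert (E1 : edist (q1+1,q2) (q1,q2) = 1).
    { unfold edist; cbn [fst snd]. replace ((q1 + 1 - q1) ^ 2 + (q2 - q2) ^ 2) with 1 by ring. apply sqrt_1. }
    assert (E2 : edist (q1-1,q2) (q1,q2) = 1).
    { unfold edist; cbn [fst snd]. replace ((q1 - 1 - q1) ^ 2 + (q2 - q2) ^ 2) with 1 by ring. apply sqrt_1. }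
    assert (E3 : edist (q1,q2+1) (q1,q2) = 1).
    { unfold edist; cbn [fst snd]. replace ((q1 - q1) ^ 2 + (q2 + 1 - q2) ^ 2) with 1 by ring. apply sqrt_1. }
    assert (E4 : edist (q1,q2-1) (q1,q2) = 1).
    { unfold edist; cbn [fst snd]. replace ((q1 - q1) ^ 2 + (q2 - 1 - q2) ^ 2) with 1 by ring. apply sqrt_1. }
    rewrite E1 in G1. rewrite E2 in G2. rewrite E3 in G3. rewrite E4 in G4.
    apply abs_inv in A1. apply abs_inv in A2.
    assert (U1 := HU (q1+1) q2). assert (U2 := HU (q1-1) q2).
    assert (U3 := HU q1 (q2+1)). assert (U4 := HU q1 (q2-1)).
    assert (Hab : forall x, Rabs x < 1 -> Rabs x <= 2).
    { intros x Hx. lra. }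
    assert (V1 : g (q1+1,q2) <= U).
    { apply HU; [replace (q1+1-p1) with ((q1-p1)+1) by ring|];
      apply Rabs_le; lra. }
    assert (V2 : g (q1-1,q2) <= U).
    { apply HU; [replace (q1-1-p1) with ((q1-p1)-1) by ring|];
      apply Rabs_le; lra. }
    assert (V3 : g (q1,q2+1) <= U).
    { apply HU; [|replace (q2+1-p2) with ((q2-p2)+1) by ring];
      apply Rabs_le; lra. }
    assert (V4 : g (q1,q2-1) <= U).
    { apply HU; [|replace (q2-1-p2) with ((q2-p2)-1) by ring];
      apply Rabs_le; lra. }
    assert (C1 : -Bd <= c1 <= Bd) by (unfold Bd; split; lra).
    assert (C2 : -Bd <= c2 <= Bd) by (unfold Bd; split; lra).
    destruct (archimed Bd) as [K1 K2]. fold K in K1, K2.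
    destruct (archimed c1) as [P1 P2]. destruct (archimed c2) as [R1 R2].
    apply in_prod; apply in_zrange; split.
    - assert (IZR (- K) < IZR (up c1)) by (rewrite opp_IZR; lra). apply lt_IZR in H. lia.
    - assert (IZR (up c1) < IZR K + 1) by lra. rewrite <- plus_IZR in H. apply lt_IZR in H. lia.
    - assert (IZR (- K) < IZR (up c2)) by (rewrite opp_IZR; lra). apply lt_IZR in H. lia.
    - assert (IZR (up c2) < IZR K + 1) by lra. rewrite <- plus_IZR in H. apply lt_IZR in H. lia. }
  assert (Hinj : NoDup (map (fun q => cell (cf q)) l)).
  { apply nodup_map_inj; auto. intros x y Hx Hy Hxy.
    destruct (classic (x = y)) as [|Hne']; auto. exfalso.
    apply (sep g x y (cf x) (cf y)); auto.
    - apply Hcf, Hl; auto.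
    - apply Hcf, Hl; auto. }
  assert (Hincl : incl (map (fun q => cell (cf q)) l) grid).
  { intros c Hc. apply in_map_iff in Hc as [q [<- Hq]]. apply Hbound; auto. }
  assert (Hle := NoDup_incl_length Hinj Hincl).
  rewrite length_map in Hle. lia.
Qed.
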